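(* Let $p,q$ be positive integers and let $T_1$ be the least period of the Cat map over $\mathbb{Z}_2$. Then $G_{T_1}$ is even and $$\tfrac12 G_{T_1}-1=\begin{cases}\frac12 pq(pq+3)^2 & \text{if } p \text{ and } q \text{ are odd};\\ pq\left(\frac12 pq+2\right) & \text{if exactly one of } p,q \text{ is odd};\\ \frac12 pq & \text{if } p \text{ and } q \text{ are even}.\end{cases}$$
   Context: $\mathbf{C}=\begin{bmatrix}1 & p\\ q & 1+pq\end{bmatrix}$; the Cat map over $\mathbb{Z}_N$ is $v\mapsto\mathbf{C}v\bmod N$ on $\mathbb{Z}_N^2$, and its least period is the least $n\ge1$ with $\mathbf{C}^nv\equiv v\pmod N$ for all $v$. $A=pq+2$, $B=\sqrt{A^2-4}$, $G_n=\left(\frac{A+B}{2}\right)^n+\left(\frac{A-B}{2}\right)^n$. *)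

(* Defs.v *)
From HB Require Import structures.
From mathcomp Require Import all_boot all_order all_algebra.
Set Implicit Arguments. Unset Strict Implicit. Unset Printing Implicit Defensive.
Import Order.TTheory GRing.Theory Num.Theory.
Local Open Scope ring_scope.

Definition catmx (N p q : nat) : 'M['Z_N]_2 :=
  \matrix_(i < 2, j < 2)
    (if (val i == 0%N) && (val j == 0%N) then 1
     else if (val i == 0%N) then p%:R
     else if (val j == 0%N) then q%:R
     else (1 + p * q)%N%:R).

Definition cat_periodic (N p q n : nat) : Prop :=
  forall v : 'cV['Z_N]_2, (catmx N p q) ^+ n *m v = v.

Definition cat_least_period (N p q n : nat) : Prop :=
  (0 < n)%N /\ cat_periodic N p q n /\
  forall m : nat, (0 < m)%N -> cat_periodic N p q m -> (n <= m)%N.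

Definition catA (R : rcfType) (p q : nat) : R := (p * q + 2)%N%:R.
Definition catB (R : rcfType) (p q : nat) : R := Num.sqrt (catA R p q ^+ 2 - 4).
Definition catG (R : rcfType) (p q n : nat) : R :=
  ((catA R p q + catB R p q) / 2) ^+ n + ((catA R p q - catB R p q) / 2) ^+ n.

(* Main.v *)
Require Import Defs.
From HB Require Import structures.
From mathcomp Require Import all_boot all_order all_algebra.
From mathcomp Require Import ring.
Import Order.TTheory GRing.Theory Num.Theory.
Local Open Scope ring_scope.
Lemma Z2nat n : (n%:R : 'Z_2) = (odd n)%:R.
Proof. elim: n => // n IH; rewrite mulrS IH /=. by case: (odd n) => /=; apply/val_inj. Qed.

Definition M2 (a b : bool) : 'M['Z_2]_2 :=
  \matrix_(i < 2, j < 2)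
    (if (val i == 0%N) && (val j == 0%N) then 1
     else if (val i == 0%N) then a%:R
     else if (val j == 0%N) then b%:R
     else (1 + (a && b))%N%:R).

Lemma catmxE p q : catmx 2 p q = M2 (odd p) (odd q).
Proof. apply/matrixP => i j; rewrite !mxE.
case: i => [[|[|//]] ?]; case: j => [[|[|//]] ?] /=; [by []|exact: Z2nat|exact: Z2nat|].
rewrite [LHS]Z2nat [RHS]Z2nat oddD oddM; by case: (odd p && odd q).
Qed.

Section MK.
Variable R : comRingType.
Definition mk (a b c d : R) : 'M[R]_2 :=
  \matrix_(i < 2, j < 2) (if val i == 0%N then (if val j == 0%N then a else b) else (if val j == 0%N then c else d)).
Lemma mk_mul a b c d e f g h : mk a b c d *m mk e f g h = mk (a*e+b*g) (a*f+b*h) (c*e+d*g) (c*f+d*h).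
Proof.
apply/matrixP => i j; rewrite !mxE !big_ord_recl big_ord0 !mxE addr0 /=.
by case: i => [[|[|//]] ?]; case: j => [[|[|//]] ?].
Qed.
Lemma mk1 : (1 : 'M[R]_2) = mk 1 0 0 1.
Proof. apply/matrixP => i j; rewrite !mxE.
by case: i => [[|[|//]] ?]; case: j => [[|[|//]] ?]. Qed.
Definition cv (x y : R) : 'cV[R]_2 := \col_(i < 2) (if val i == 0%N then x else y).
Lemma mk_mulv a b c d x y : mk a b c d *m cv x y = cv (a*x+b*y) (c*x+d*y).
Proof.
apply/matrixP => i j; rewrite !mxE !big_ord_recl big_ord0 !mxE addr0 /=.
by case: i => [[|[|//]] ?].
Qed.
Lemma cv_inj x y x' y' : cv x y = cv x' y' -> x = x' /\ y = y'.
Proof. move=> /matrixP h; split; [have := h 0 0 | have := h 1 0]; by rewrite !mxE. Qed.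
End MK.
Arguments mk {R}. Arguments cv {R}.
Lemma M2E a b : M2 a b = mk 1 a%:R b%:R (1 + (a && b))%N%:R.
Proof. apply/matrixP => i j; rewrite !mxE.
by case: i => [[|[|//]] ?]; case: j => [[|[|//]] ?]. Qed.
Lemma pow3 : (M2 true true) ^+ 3 = 1.
Proof. rewrite !exprS expr0 mulr1 -!mulmxE M2E !mk_mul mk1.
congr mk; by apply/val_inj.
Qed.
Section G.
Variables (R : rcfType) (p q : nat).
Local Notation cA := (Defs.catA R p q).
Local Notation cB := (catB R p q).
Lemma B2 : cB ^+ 2 = cA ^+ 2 - 4.
Proof. rewrite /catB sqr_sqrtr // subr_ge0 /Defs.catA.
have h : (4 : R) = 2%:R ^+ 2 by rewrite -natrX.
rewrite h -!natrX ler_nat !expnS expn0 !muln1; apply: leq_mul; apply: leq_addl.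
Qed.
Lemma G1 : catG R p q 1 = cA.
Proof. rewrite /catG !expr1. by field. Qed.
Lemma G2 : catG R p q 2 = cA ^+ 2 - 2.
Proof. apply/eqP; rewrite -subr_eq0; apply/eqP.
have -> : catG R p q 2 - (cA ^+ 2 - 2) = (cB ^+ 2 - (cA ^+ 2 - 4)) / 2.
  rewrite /catG; by field.
by rewrite B2 subrr mul0r. Qed.
Lemma G3 : catG R p q 3 = cA ^+ 3 - 3 * cA.
Proof. apply/eqP; rewrite -subr_eq0; apply/eqP.
have -> : catG R p q 3 - (cA ^+ 3 - 3 * cA) = 3 * cA * (cB ^+ 2 - (cA ^+ 2 - 4)) / 4.
  rewrite /catG; by field.
by rewrite B2 subrr mulr0 mul0r. Qed.
End G.

Lemma nonper p q m (v : 'cV['Z_2]_2) :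
  (M2 (odd p) (odd q)) ^+ m *m v != v -> ~ cat_periodic 2 p q m.
Proof. move=> /eqP h per; apply: h; by rewrite -catmxE per. Qed.

Lemma per_of p q m : (M2 (odd p) (odd q)) ^+ m = 1 -> cat_periodic 2 p q m.
Proof. move=> h v; by rewrite catmxE h mul1mx. Qed.

Lemma cvne (x y x' y' : 'Z_2) : x != x' -> cv x y != cv x' y'.
Proof. by move=> /eqP h; apply/eqP => /cv_inj [] /h. Qed.

Lemma cvne' (x y x' y' : 'Z_2) : y != y' -> cv x y != cv x' y'.
Proof. by move=> /eqP h; apply/eqP => /cv_inj [] _ /h. Qed.

Lemma periodT (p q T1 : nat) : cat_least_period 2 p q T1 ->
  T1 = if odd p && odd q then 3%N else if odd p (+) odd q then 2%N else 1%N.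
Proof.
move=> [T0 [Tper Tmin]].
case hp: (odd p); case hq: (odd q) => /=.
- have P : cat_periodic 2 p q 3 by apply: per_of; rewrite hp hq pow3.
  have := Tmin 3%N isT P.
  move: T0 Tper Tmin; case: T1 => [|[|[|[|//]]]] // _ Tper _ _.
  + exfalso; apply: (@nonper p q _ (cv 0 1) _ Tper).
    rewrite hp hq expr1 M2E mk_mulv; apply: cvne; by apply/eqP => /(congr1 val).
  + exfalso; apply: (@nonper p q _ (cv 1 0) _ Tper).
    rewrite hp hq !exprS expr0 mulr1 -!mulmxE M2E !mk_mul mk_mulv; apply: cvne.
    by apply/eqP => /(congr1 val).
- have P : cat_periodic 2 p q 2.
    apply: per_of; rewrite hp hq.
    rewrite !exprS expr0 mulr1 -!mulmxE M2E !mk_mul mk1; congr mk; by apply/val_inj.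
  have := Tmin 2%N isT P.
  move: T0 Tper Tmin; case: T1 => [|[|[|//]]] // _ Tper _ _.
  exfalso; apply: (@nonper p q _ (cv 0 1) _ Tper).
  rewrite hp hq expr1 M2E mk_mulv; apply: cvne; by apply/eqP => /(congr1 val).
- have P : cat_periodic 2 p q 2.
    apply: per_of; rewrite hp hq.
    rewrite !exprS expr0 mulr1 -!mulmxE M2E !mk_mul mk1; congr mk; by apply/val_inj.
  have := Tmin 2%N isT P.
  move: T0 Tper Tmin; case: T1 => [|[|[|//]]] // _ Tper _ _.
  exfalso; apply: (@nonper p q _ (cv 1 0) _ Tper).
  rewrite hp hq expr1 M2E mk_mulv; apply: cvne'; by apply/eqP => /(congr1 val).
- have P : cat_periodic 2 p q 1.
    apply: per_of; rewrite hp hq.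
    rewrite expr1 M2E mk1; congr mk; by apply/val_inj.
  have := Tmin 1%N isT P.
  by move: T0 Tper Tmin; case: T1 => [|[|//]].
Qed.

Theorem proposition4 (R : rcfType) (p q T1 : nat) :
  (0 < p)%N -> (0 < q)%N -> cat_least_period 2 p q T1 ->
  (exists k : int, catG R p q T1 = (2 * k)%:~R) /\
  catG R p q T1 / 2 - 1 =
    (if odd p && odd q then
       (p * q)%N%:R * ((p * q)%N%:R + 3) ^+ 2 / 2
     else if odd p (+) odd q then
       (p * q)%N%:R * ((p * q)%N%:R / 2 + 2)
     else (p * q)%N%:R / 2).
Proof.
move=> p0 q0 /periodT ->.
have hA : Defs.catA R p q = (p*q)%N%:R + 2 by rewrite /Defs.catA natrD.
have hd := odd_double_half (p * q).
rewrite oddM in hd.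
case hp: (odd p); case hq: (odd q); rewrite hp hq /= in hd *.
- rewrite G3 hA -hd -addn1 -muln2.
  split.
    exists (2*(2*((p*q)./2)+1)*((p*q)./2+2)^2+1)%N%:Z.
    rewrite intrM /= !(natrD, natrM, natrX, mulrnA); ring.
  rewrite !(natrD, natrM, natrX); by field.
- rewrite G2 hA -hd -muln2.
  split.
    exists (2*((p*q)./2)^2+4*((p*q)./2)+1)%N%:Z.
    rewrite intrM /= !(natrD, natrM, natrX, mulrnA); ring.
  rewrite !(natrD, natrM, natrX); by field.
- rewrite G2 hA -hd -muln2.
  split.
    exists (2*((p*q)./2)^2+4*((p*q)./2)+1)%N%:Z.
    rewrite intrM /= !(natrD, natrM, natrX, mulrnA); ring.
  rewrite !(natrD, natrM, natrX); by field.
- rewrite G1 hA -hd -muln2.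
  split.
    exists ((p*q)./2+1)%N%:Z.
    rewrite intrM /= !(natrD, natrM, natrX, mulrnA); ring.
  rewrite !(natrD, natrM, natrX); by field.
Qed.
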